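(* Let $G\in\mathcal{C}$, $N\unlhd G$, and let $(H,H,\vartheta)\in\mathcal{L}_N$ have second node $(H_2,A_2,\vartheta_2)$. If $H\unlhd N_G(\ker\vartheta_2)$, then $(H,\ker\vartheta)$ is a strong Shoda pair of $G$.
   Context: All groups are finite. $\mathcal{C}$ is the class of finite groups $G$ such that every subgroup and quotient group of $G$ is either abelian or contains a non-central abelian normal subgroup. $\psi^x(g)=\psi(xgx^{-1})$, $\psi^G$ induced character, $1_N$ trivial character. For $K\unlhd H\le G$: $\widehat H=\frac1{|H|}\sum_{h\in H}h$; $\varepsilon(H,K)=\widehat K$ if $H=K$, else $\prod(\widehat K-\widehat L)$ over $L\unlhd H$ with $L/K$ minimal normal in $H/K$. A strong Shoda pair of $G$ is $(H,K)$ with $K\unlhd H\unlhd N_G(K)$, $H/K$ cyclic and a maximal abelian subgroup of $N_G(K)/K$, and the distinct $G$-conjugates of $\varepsilon(H,K)$ mutually orthogonal. An $N$-linear character triple of $G$ is $(H,A,\vartheta)$ with $H\le G$, $A\unlhd H$, $\vartheta$ a linear character of $A$ invariant in $H$, and $\ker(\vartheta^G)=N$. For $B\unlhd M\le G$ and linear $\lambda$ on $B$, $\widetilde{\operatorname{Lin}}(M|\lambda)$ is the set of linear characters of $M$ whose restriction to $B$ contains $\lambda$ and whose induction to $G$ has kernel $N$. For each triple a normal subgroup $\mathcal{A}=\mathcal{A}_{(H,A,\vartheta)}$ of $H$ is fixed, of maximal order among normal subgroups of $H$ containing $\ker\vartheta$ with abelian quotient by $\ker\vartheta$. $\operatorname{Aut}(\mathbb{C}|\vartheta)\times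 H$ acts on $\widetilde{\operatorname{Lin}}(\mathcal{A}|\vartheta)$ by $(\sigma,h)\cdot\varphi=\sigma\circ\varphi^h$ ($\sigma$ a field automorphism of $\mathbb{C}$ fixing $\mathbb{Q}(\vartheta)$); fix orbit representatives $\mathfrak{Lin}(\mathcal{A}|\vartheta)$. If $H\neq A$, $Cl(H,A,\vartheta)=\{(I_H(\varphi),\mathcal{A},\varphi):\varphi\in\mathfrak{Lin}(\mathcal{A}|\vartheta)\}$, $I_H(\varphi)=\{h\in H:\varphi^h=\varphi\}$; if $H=A$, empty. $\mathcal{G}_N$: directed graph of $N$-linear triples reachable from $(G,N,1_N)$, edges $(u,v)$ whenever $v\in Cl(u)$; each vertex is reached by a unique directed path from the root. $\mathcal{L}_N$: vertices of the form $(H,H,\vartheta)$. For such a leaf with path $v_1=(G,N,1_N),v_2,\dots,v_n=(H,H,\vartheta)$, $v_i$ is its $i$-th node (so the second node is $v_2$, existing when $n\ge2$). *)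

(* Defs.v *)
From HB Require Import structures.
From mathcomp Require Import all_boot all_order all_algebra all_fingroup all_solvable all_field all_character.
Set Implicit Arguments.
Unset Strict Implicit.
Unset Printing Implicit Defensive.
Import GRing.Theory Num.Theory.
Local Open Scope group_scope.

Section Defs.
Variable gT : finGroupType.

Definition abelian_or_ncan (T : finGroupType) (X : {group T}) : bool :=
  abelian X ||
  [exists A : {group T}, [&& A <| X, abelian A & ~~ (A \subset 'Z(X))]].

Definition classC (G : {group gT}) : Prop :=
  (forall H : {group gT}, H \subset G -> abelian_or_ncan H) /\
  (forall M : {group gT}, M <| G -> abelian_or_ncan (G / M)%G).

(* ---------- the rational group algebra QG, as functions gT -> rat ---------- *)
Definition gmul (a b : {ffun gT -> rat}) : {ffun gT -> rat} :=
  [ffun g => (\sum_(x : gT) a x * b (x^-1 * g)%g)%R].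
Definition gone : {ffun gT -> rat} := [ffun g : gT => ((g == 1%g)%:R : rat)%R].
Definition ghat (H : {set gT}) : {ffun gT -> rat} :=
  [ffun g => if g \in H then ((#|H|%:R)^-1)%R else 0%R].
(* the conjugate g e g^-1 *)
Definition gconj (e : {ffun gT -> rat}) (g : gT) : {ffun gT -> rat} :=
  [ffun x => e (x ^ g)].

Definition geps (H K : {group gT}) : {ffun gT -> rat} :=
  if H == K then ghat K
  else foldr gmul gone
    [seq (ghat K - ghat (gval L))%R | L : {group gT} <- enum [set L : {group gT} |
        [&& K \subset L, L <| H & minnormal (L / K) (H / K)]]].

Definition strong_Shoda_pair (G H K : {group gT}) : Prop :=
  [/\ K <| H, H <| 'N_G(K), cyclic (H / K),
      [max (H / K)%G of B | (B \subset 'N_G(K) / K) && abelian B] &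
      forall g1 g2, g1 \in G -> g2 \in G ->
        gconj (geps H K) g1 != gconj (geps H K) g2 ->
        gmul (gconj (geps H K) g1) (gconj (geps H K) g2) = 0%R].

Record triple := Triple { tH : {group gT}; tA : {group gT}; ttheta : 'CF(tA) }.

Definition NLinTriple (G N : {group gT}) (t : triple) : Prop :=
  [/\ tH t \subset G, tA t <| tH t, ttheta t \is a linear_char,
      (forall h, h \in tH t -> (ttheta t ^ h)%CF = ttheta t) &
      cfker ('Ind[G] (ttheta t))%R = N].

Definition LinT (G N B M : {group gT}) (lam : 'CF(B)) (phi : 'CF(M)) : Prop :=
  [/\ phi \is a linear_char, ('['Res[B] phi, lam] != 0)%R &
      cfker ('Ind[G] phi)%R = N].

Definition calA_spec (t : triple) (Ac : {group gT}) : Prop :=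
  [/\ Ac <| tH t, cfker (ttheta t) \subset Ac, abelian (Ac / cfker (ttheta t)) &
      forall B : {group gT}, B <| tH t -> cfker (ttheta t) \subset B ->
        abelian (B / cfker (ttheta t)) -> #|B| <= #|Ac|]%N.

(* the orbit relation of Aut(C|theta) x H acting by (sigma,h).phi = sigma o phi^h *)
Definition same_orbit (t : triple) (M : {group gT}) (phi psi : 'CF(M)) : Prop :=
  exists u : {rmorphism algC -> algC},
    (forall a, u (ttheta t a) = ttheta t a) /\
    exists2 h, h \in tH t & psi = cfAut u (phi ^ h)%CF.

Definition reps_spec (G N : {group gT}) (t : triple) (Ac : {group gT})
    (Reps : 'CF(Ac) -> Prop) : Prop :=
  [/\ (forall phi, Reps phi -> LinT G N (ttheta t) phi),
      (forall phi, LinT G N (ttheta t) phi ->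
          exists2 psi, Reps psi & same_orbit t psi phi) &
      (forall psi1 psi2, Reps psi1 -> Reps psi2 ->
          same_orbit t psi1 psi2 -> psi1 = psi2)].

Definition Cl_edge (chA : triple -> {group gT})
    (chL : forall t : triple, 'CF(chA t) -> Prop) (u v : triple) : Prop :=
  tH u != tA u /\
  exists2 phi : 'CF(chA u), chL u phi &
    v = @Triple ('I_(tH u)[phi])%G (chA u) phi.

End Defs.

(* Main.v *)
Require Import Defs.
From HB Require Import structures.
From mathcomp Require Import all_boot all_order all_algebra all_fingroup all_solvable all_field all_character.
From mathcomp Require Import ring zify.
Import GRing.Theory Num.Theory.
Local Open Scope group_scope.
Set Implicit Arguments.
Unset Strict Implicit.

Section GA.
Variable gT : finGroupType.
Implicit Types a b c : {ffun gT -> rat}.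

Lemma gmulA a b c : gmul (gmul a b) c = gmul a (gmul b c).
Proof.
apply/ffunP=> g; rewrite !ffunE.
under eq_bigr do rewrite ffunE big_distrl /=.
rewrite exchange_big /=; apply: eq_bigr => x _.
rewrite ffunE big_distrr /= (reindex_inj (mulgI x)) /=.
by apply: eq_bigr => z _; rewrite mulKg GRing.mulrA invMg mulgA.
Qed.

Lemma gmul1l a : gmul (gone gT) a = a.
Proof.
apply/ffunP=> g; rewrite ffunE (bigD1 1%g) //= big1 => [|x nx1].
  by rewrite ffunE eqxx GRing.mul1r invg1 mul1g GRing.addr0.
by rewrite ffunE (negbTE nx1) GRing.mul0r.
Qed.

Lemma gmul1r a : gmul a (gone gT) = a.
Proof.
apply/ffunP=> g; rewrite ffunE (bigD1 g) //= big1 => [|x nxg].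
  by rewrite ffunE mulVg eqxx GRing.mulr1 GRing.addr0.
by rewrite ffunE -eq_mulVg1 (negbTE nxg) GRing.mulr0.
Qed.

Lemma gmulBl a b c : gmul (a - b)%R c = (gmul a c - gmul b c)%R.
Proof.
apply/ffunP=> g; rewrite !ffunE -sumrB; apply: eq_bigr => x _.
by rewrite !ffunE GRing.mulrBl.
Qed.

Lemma gmulBr a b c : gmul a (b - c)%R = (gmul a b - gmul a c)%R.
Proof.
apply/ffunP=> g; rewrite !ffunE -sumrB; apply: eq_bigr => x _.
by rewrite !ffunE GRing.mulrBr.
Qed.

Lemma gmul0l a : gmul 0%R a = 0%R.
Proof. by apply/ffunP=> g; rewrite !ffunE big1 // => x _; rewrite ffunE GRing.mul0r. Qed.

Lemma gmul0r a : gmul a 0%R = 0%R.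
Proof. by apply/ffunP=> g; rewrite !ffunE big1 // => x _; rewrite ffunE GRing.mulr0. Qed.

Lemma gconjM a b g : gconj (gmul a b) g = gmul (gconj a g) (gconj b g).
Proof.
apply/ffunP=> x; rewrite !ffunE (reindex_inj (conjg_inj g)) /=.
by apply: eq_bigr => y _; rewrite !ffunE conjMg conjVg.
Qed.

Lemma gconj1 g : gconj (gone gT) g = gone gT.
Proof. by apply/ffunP=> x; rewrite !ffunE conjg_eq1. Qed.

Lemma gconjB a b g : gconj (a - b)%R g = (gconj a g - gconj b g)%R.
Proof. by apply/ffunP=> x; rewrite !ffunE. Qed.

Lemma gconj0 g : gconj (0 : {ffun gT -> rat})%R g = 0%R.
Proof. by apply/ffunP=> x; rewrite !ffunE. Qed.

Lemma gconjJ a x y : gconj (gconj a x) y = gconj a (y * x).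
Proof. by apply/ffunP=> z; rewrite !ffunE conjgM. Qed.

Lemma gconj_hat (X : {set gT}) g : gconj (ghat X) g = ghat (X :^ g^-1).
Proof.
by apply/ffunP=> x; rewrite !ffunE cardJg mem_conjgV.
Qed.

Lemma ghatM (X Y : {group gT}) : gmul (ghat X) (ghat Y) = ghat (X * Y).
Proof.
apply/ffunP=> z; rewrite !ffunE.
rewrite (eq_bigr (fun x => if (x \in X) && (x^-1 * z \in Y) then
     (#|X|%:R^-1 * #|Y|%:R^-1)%R else 0%R)); last first.
  by move=> x _; rewrite !ffunE; case: (x \in X); case: (_ \in Y);
     rewrite ?GRing.mulr0 ?GRing.mul0r.
rewrite -big_mkcond /= sumr_const.
have XYpos : (0 < #|(X * Y)%g|)%N.
  by apply/card_gt0P; exists 1%g; apply/mulsgP; exists 1%g 1%g; rewrite ?mulg1.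
case: ifP => [/mulsgP[x0 y0 Xx0 Yy0 ->] | nXY].
  have ->: #|[pred x | (x \in X) && (x^-1 * (x0 * y0) \in Y)]| = #|X :&: Y|.
    rewrite -(card_lcoset _ x0); apply: eq_card => x.
    rewrite mem_lcoset !inE mulgA groupMr // -[x^-1 * x0 \in Y]groupV invMg invgK.
    by rewrite (groupMl _ (groupVr Xx0)).
    have eI : (#|X :&: Y|%:R : rat) = (#|X|%:R * #|Y|%:R / #|(X * Y)%g|%:R)%R.
    rewrite -natrM mul_cardG natrM GRing.mulrC GRing.mulKf //.
    by rewrite pnatr_eq0 -lt0n.
  rewrite -[(_ *+ #|X :&: Y|)%R]GRing.mulr_natr eI; field.
  by rewrite !pnatr_eq0 -!lt0n XYpos !cardG_gt0.
rewrite eq_card0 ?GRing.mulr0n // => x; rewrite !inE; apply/negP => /andP[Xx Yx].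
by move: nXY; rewrite -(mulKVg x z); move/negbT/negP; apply; apply/mulsgP; exists x (x^-1 * z)%g.
Qed.

Lemma gprod_comm (s : seq {ffun gT -> rat}) y :
  (forall f, f \in s -> gmul f y = gmul y f) ->
  gmul (foldr (@gmul gT) (gone gT) s) y = gmul y (foldr (@gmul gT) (gone gT) s).
Proof.
elim: s => [|f s IH] Hs /=; first by rewrite gmul1l gmul1r.
rewrite gmulA IH; last by move=> h hs; apply: Hs; rewrite inE hs orbT.
by rewrite -gmulA Hs ?mem_head // gmulA.
Qed.

Lemma gprod_zero (s : seq {ffun gT -> rat}) y :
  (forall f, f \in s -> gmul f y = gmul y f) ->
  (exists2 f, f \in s & gmul f y = 0%R) ->
  gmul (foldr (@gmul gT) (gone gT) s) y = 0%R.
Proof.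
elim: s => [|f s IH] Hs [h]; first by rewrite in_nil.
rewrite inE => /orP[/eqP-> | hs] hy0 /=.
  rewrite gmulA gprod_comm; last by move=> k ks; apply: Hs; rewrite inE ks orbT.
  by rewrite -gmulA hy0 gmul0l.
rewrite gmulA IH ?gmul0r //; first by move=> k ks; apply: Hs; rewrite inE ks orbT.
by exists h.
Qed.

Lemma gprod_absorb (s : seq {ffun gT -> rat}) y : s != [::] ->
  (forall f, f \in s -> gmul f y = f /\ gmul y f = f) ->
  gmul (foldr (@gmul gT) (gone gT) s) y = foldr (@gmul gT) (gone gT) s /\
  gmul y (foldr (@gmul gT) (gone gT) s) = foldr (@gmul gT) (gone gT) s.
Proof.
elim: s => [|f s IH] // _ Hs /=.
have [fy yf] := Hs f (mem_head _ _).
split; last by rewrite -gmulA yf.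
case: s IH Hs => [|f' s'] IH Hs /=; first by rewrite gmul1r fy.
rewrite gmulA; congr (gmul f _).
have Hs' : forall k, k \in f' :: s' -> gmul k y = k /\ gmul y k = k.
  by move=> k ks; apply: Hs; rewrite inE ks orbT.
by case: (IH isT Hs') => ->.
Qed.

Lemma gconj_prod (s : seq {ffun gT -> rat}) g :
  gconj (foldr (@gmul gT) (gone gT) s) g =
  foldr (@gmul gT) (gone gT) (map (fun f => gconj f g) s).
Proof. by elim: s => [|f s IH] /=; rewrite ?gconj1 // gconjM IH. Qed.

End GA.

Section Eps.
Variable gT : finGroupType.
Variables H K : {group gT}.
Hypothesis nKH : K <| H.
Hypothesis abHK : abelian (H / K).

Let Sset := [set L : {group gT} | [&& K \subset L, L <| H & minnormal (L / K) (H / K)]].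
Let lst := [seq (ghat K - ghat (gval L))%R | L <- enum Sset].

Lemma gepsE : geps H K = if H == K then ghat K else foldr (@gmul gT) (gone gT) lst.
Proof. by []. Qed.

Lemma lift_minnormal (X : {group gT}) (M : {group coset_of K}) :
  K \subset X -> X \subset H -> minnormal M (H / K) -> M \subset X / K ->
  exists2 L : {group gT}, L \in Sset & L \subset X.
Proof.
move=> sKX sXH minM sMX.
have nKX : K <| X by apply: normalS nKH.
case/mingroupP: (minM) => /andP[ntM nMH] _.
exists (coset K @*^-1 M)%G; last first.
  by rewrite -(quotientGK nKX) cosetpreSK.
rewrite inE /= sub_cosetpre cosetpreK minM andbT.
rewrite -(quotientGK nKH) cosetpre_normal /normal nMH andbT.
exact: subset_trans sMX (quotientS _ sXH).
Qed.

Lemma geps_hatK : gmul (geps H K) (ghat K) = geps H K /\ gmul (ghat K) (geps H K) = geps H K.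
Proof.
rewrite gepsE; case: eqP => [_ | neHK]; first by rewrite ghatM mulGid.
apply: gprod_absorb.
  have ntHK : (H / K) != 1%g :> {set coset_of K}.
    apply/eqP => h; apply: neHK; apply/val_inj/eqP.
    by rewrite eqEsubset (normal_sub nKH) andbT -quotient_sub1 ?normal_norm // h.
  have [M minM sMH] := minnormal_exists ntHK (normG _).
  have [L SL _] := lift_minnormal (normal_sub nKH) (subxx H) minM sMH.
  have LS : L \in enum Sset by rewrite mem_enum.
  by apply/eqP => h; have := map_f (fun L : {group gT} => (ghat K - ghat (gval L))%R) LS; rewrite -/lst h in_nil.
move=> f /mapP[L]; rewrite mem_enum inE => /and3P[sKL _ _] ->.
by rewrite gmulBl gmulBr !ghatM mulGid mulGSid // mulSGid.
Qed.

Lemma geps_hat0 (X : {group gT}) :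
  K \subset X -> X \subset H -> ~~ (X \subset K) -> gmul (geps H K) (ghat X) = 0%R.
Proof.
move=> sKX sXH nsXK; rewrite gepsE; case: eqP => [eHK | neHK].
  by move: nsXK; rewrite -eHK sXH.
have nKX : X \subset 'N(K) := subset_trans sXH (normal_norm nKH).
apply: gprod_zero.
  move=> f /mapP[L]; rewrite mem_enum inE => /and3P[sKL nLH _] ->.
  rewrite gmulBl gmulBr !ghatM (normC nKX) (normC (subset_trans sXH (normal_norm nLH))).
  by [].
have ntXK : (X / K) != 1%g :> {set coset_of K}.
  by apply/eqP => h; move: nsXK; rewrite -quotient_sub1 // h subxx.
have nXKH : (H / K)%G \subset 'N((X / K)%G).
  by apply: cents_norm; apply: sub_abelian_cent abHK (quotientS _ sXH).
have [M minM sMX] := minnormal_exists ntXK nXKH.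
have [L SL sLX] := lift_minnormal sKX sXH minM sMX.
have LS : L \in enum Sset by rewrite mem_enum.
exists (ghat K - ghat (gval L))%R; first exact: (map_f (fun L : {group gT} => (ghat K - ghat (gval L))%R) LS).
move: SL; rewrite inE => /and3P[sKL _ _].
by rewrite gmulBl !ghatM !mulSGid // GRing.subrr.
Qed.

Lemma conj_Sset_fix (L : {group gT}) x : cyclic (H / K) -> x \in 'N(K) -> x \in 'N(H) ->
  L \in Sset -> L :^ x = L.
Proof.
move=> cHK nKx nHx; rewrite inE => /and3P[sKL nLH _].
have sLH := normal_sub nLH.
have sKLx : K \subset L :^ x by rewrite -(normP nKx) conjSg.
have sLxH : L :^ x \subset H by rewrite -(normP nHx) conjSg.
have nKLx : K <| (L :^ x)%G by apply: normalS sLxH nKH.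
have nKL : K <| L by apply: normalS sLH nKH.
have eq : (L :^ x)%G / K = L / K.
  apply/eqP; rewrite (eq_subG_cyclic cHK) ?quotientS //=.
  rewrite !card_quotient ?normal_norm // -!divgS ?normal_sub //.
  by rewrite cardJg.
by rewrite -(quotientGK nKLx) -(quotientGK nKL) /= eq.
Qed.

Lemma geps_conj_fix g : cyclic (H / K) -> g \in 'N(K) -> g \in 'N(H) ->
  gconj (geps H K) g = geps H K.
Proof.
move=> cHK nKg nHg; rewrite gepsE.
have nKg' : g^-1 \in 'N(K) by rewrite groupV.
have nHg' : g^-1 \in 'N(H) by rewrite groupV.
case: eqP => _; first by rewrite gconj_hat (normP nKg').
rewrite gconj_prod /lst -map_comp; congr foldr; apply/eq_in_map => L.
rewrite mem_enum => SL /=.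
by rewrite gconjB !gconj_hat (normP nKg') (conj_Sset_fix cHK nKg' nHg' SL).
Qed.
End Eps.

Section Orth.
Variable gT : finGroupType.
Variables G H K A2 K2 : {group gT}.
Hypotheses (nKH : K <| H) (cHK : cyclic (H / K)) (nA2G : A2 <| G) (nK2A2 : K2 <| A2).
Hypotheses (sA2H : A2 \subset H) (sHG : H \subset G) (eK2 : A2 :&: K = K2).
Hypothesis nHN : 'N_G(K2) \subset 'N(H).

Lemma eps_orth g : g \in G -> g \notin 'N(K) ->
  gmul (geps H K) (gconj (geps H K) g) = 0%R.
Proof.
move=> Gg nKg.
have abHK := cyclic_abelian cHK.
set e := geps H K.
have [eK Ke] := geps_hatK nKH; rewrite -/e in eK Ke.
have sK2K : K2 \subset K by rewrite -eK2 subsetIr.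
have eK2' : gmul e (ghat K2) = e by rewrite -eK gmulA ghatM mulGSid.
have K2e : gmul (ghat K2) e = e by rewrite -Ke -gmulA ghatM mulSGid.
have Ke' : gmul (ghat (K :^ g^-1)) (gconj e g) = gconj e g.
  by rewrite -gconj_hat -gconjM Ke.
have K2e' : gmul (ghat (K2 :^ g^-1)) (gconj e g) = gconj e g.
  by rewrite -gconj_hat -gconjM K2e.
have nKH' := normal_norm nKH.
suff [X [sKX sXH nsXK eX]] : exists X : {group gT}, [/\ K \subset X, X \subset H,
    ~~ (X \subset K) & gmul e (gconj e g) = gmul (gmul e (ghat X)) (gconj e g)].
  by rewrite eX (geps_hat0 nKH abHK sKX sXH nsXK) gmul0l.
have Gg' : g^-1 \in G by rewrite groupV.
case nK2g: (g \in 'N(K2)).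
  have nHg : g^-1 \in 'N(H).
    by rewrite (subsetP nHN) // inE Gg' groupV nK2g.
  have sK'H : K :^ g^-1 \subset H by rewrite -(normP nHg) conjSg normal_sub.
  have nKK' : (K :^ g^-1)%G \subset 'N(K) := subset_trans sK'H nKH'.
  exists (K <*> (K :^ g^-1)%G)%G; split.
  - exact: joing_subl.
  - by rewrite join_subG normal_sub.
  - apply: contra nKg => sXK.
    have sK'K : K :^ g^-1 \subset K := subset_trans (joing_subr _ _) sXK.
    rewrite -groupV; apply/normP/eqP; by rewrite eqEcard sK'K cardJg leqnn.
  rewrite /= (norm_joinEr nKK') -ghatM !gmulA Ke' -gmulA eK.
  by [].
have nA2g : g^-1 \in 'N(A2) by rewrite (subsetP (normal_norm nA2G)).
have sK2'A2 : K2 :^ g^-1 \subset A2 by rewrite -(normP nA2g) conjSg normal_sub.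
have nK2K2' : (K2 :^ g^-1)%G \subset 'N(K2) := subset_trans sK2'A2 (normal_norm nK2A2).
set M := (K2 <*> (K2 :^ g^-1)%G)%G.
have sMA2 : M \subset A2 by rewrite join_subG normal_sub.
have nKM : M \subset 'N(K) := subset_trans (subset_trans sMA2 sA2H) nKH'.
exists (K <*> M)%G; split.
- exact: joing_subl.
- by rewrite join_subG normal_sub //= (subset_trans sMA2 sA2H).
- apply: contraFN nK2g => sXK.
  have sK2'K : K2 :^ g^-1 \subset K.
    exact: subset_trans (joing_subr _ _) (subset_trans (joing_subr _ _) sXK).
  have : K2 :^ g^-1 \subset A2 :&: K by rewrite subsetI sK2'A2.
  rewrite eK2 => sK2'K2.
  rewrite -groupV; apply/normP/eqP; by rewrite eqEcard sK2'K2 cardJg leqnn.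
rewrite /= (norm_joinEr nKM) -ghatM /M /= (norm_joinEr nK2K2') -ghatM.
by rewrite !gmulA K2e' -gmulA eK -gmulA eK2'.
Qed.
End Orth.

Section CharFacts.
Variable gT : finGroupType.

Lemma lin_eq (A : {group gT}) (phi psi : 'CF(A)) :
  phi \is a linear_char -> psi \is a linear_char -> ('[phi, psi] != 0)%R -> phi = psi.
Proof.
move=> /lin_char_irr/irrP[i ->] /lin_char_irr/irrP[j ->].
by rewrite cfdot_irr; case: (i =P j) => [-> // | _]; rewrite eqxx.
Qed.

Lemma comm_ker (Hh A : {group gT}) (th : 'CF(A)) :
  A <| Hh -> th \is a linear_char -> (forall h, h \in Hh -> (th ^ h)%CF = th) ->
  [~: A, Hh] \subset cfker th.
Proof.
move=> nAH lth inv; rewrite gen_subG; apply/subsetP => _ /imset2P[a h Aa Hh_h ->].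
have nAh : h \in 'N(A) by rewrite (subsetP (normal_norm nAH)).
have nAh' : h^-1 \in 'N(A) by rewrite groupV.
have Aah : a ^ h \in A by rewrite memJ_norm.
rewrite /= cfkerEchar ?lin_charW // inE groupM ?groupV //=.
rewrite lin_charM ?groupV // lin_charV // lin_char1 //.
have -> : th (a ^ h) = th a.
  by rewrite -{2}(inv h^-1) ?groupV // cfConjgE // invgK.
by rewrite GRing.mulVf ?lin_char_neq0.
Qed.

Lemma norm_ker (Hh A : {group gT}) (th : 'CF(A)) :
  A <| Hh -> (forall h, h \in Hh -> (th ^ h)%CF = th) -> Hh \subset 'N(cfker th).
Proof.
move=> nAH inv; apply/subsetP => h Hh_h.
have nAh : h \in 'N(A) by rewrite (subsetP (normal_norm nAH)).
by apply/normP; rewrite -cfker_conjg // inv.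
Qed.

Lemma sub_calA (Hh A A' : {group gT}) (th : 'CF(A)) :
  A <| Hh -> th \is a linear_char -> (forall h, h \in Hh -> (th ^ h)%CF = th) ->
  A' <| Hh -> cfker th \subset A' -> abelian (A' / cfker th) ->
  (forall B : {group gT}, B <| Hh -> cfker th \subset B ->
        abelian (B / cfker th) -> #|B| <= #|A'|)%N ->
  A \subset A'.
Proof.
move=> nAH lth inv nA'H sKA' abA' maxA'.
have cK := comm_ker nAH lth inv.
have nKH := norm_ker nAH inv.
have sAH := normal_sub nAH; have sA'H := normal_sub nA'H.
have nT : (A <*> A')%G <| Hh by apply: normalY.
have sKT : cfker th \subset A <*> A' := subset_trans sKA' (joing_subr _ _).
have abT : abelian ((A <*> A') / cfker th).
  rewrite quotientY ?(subset_trans sAH nKH) ?(subset_trans sA'H nKH) //.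
  rewrite abelianY abA' /= /abelian.
  rewrite quotient_cents2r ?(subset_trans (commgSS (subxx A) sAH) cK) //=.
  by rewrite quotient_cents2r // commGC (subset_trans (commgSS (subxx A) sA'H) cK).
have := maxA' _ nT sKT abT.
have sA'T : A' \subset A <*> A' := joing_subr _ _.
move=> le; have /eqP eT : A' == A <*> A' :> {set gT} by rewrite eqEcard sA'T le.
by rewrite eT joing_subl.
Qed.
End CharFacts.

Unset Implicit Arguments.
Section Chain.
Local Open Scope ring_scope.
Variables (gT : finGroupType) (G N : {group gT}).
Variables (chA : triple gT -> {group gT}) (chL : forall t : triple gT, 'CF(chA t) -> Prop).
Variables (v : nat -> triple gT) (n : nat).
Hypothesis hA : forall t, NLinTriple G N t -> calA_spec t (chA t).
Hypothesis hR : forall t, NLinTriple G N t -> reps_spec G N t (chL t).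
Hypothesis hv0 : v 0%N = @Triple gT G N (1%R : 'CF(N)).
Hypothesis hNL : forall i, (i < n)%N -> NLinTriple G N (v i).
Hypothesis hE : forall i, (i.+1 < n)%N -> Cl_edge chL (v i) (v i.+1).

Lemma edge_facts i : (i.+1 < n)%N ->
  [/\ tA (v i.+1) = chA (v i), tH (v i.+1) \subset tH (v i),
      (forall b, b \in tH (v i) -> b \in 'N(tA (v i.+1)) ->
          (ttheta (v i.+1) ^ b)%CF = ttheta (v i.+1) -> b \in tH (v i.+1)) &
      LinT G N (ttheta (v i)) (ttheta (v i.+1))].
Proof.
move=> lt; have [_ [phi Lphi ev]] := hE i lt.
have [Rphi _ _] := hR _ (hNL i (ltnW lt)).
rewrite ev /=; split=> //; first exact: subsetIl.
- by move=> b Hb nb eb; rewrite inE Hb inE nb /= eb eqxx.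
- exact: Rphi.
Qed.

Lemma sub_next i : (i.+1 < n)%N ->
  tA (v i) \subset tA (v i.+1) /\ 'Res[tA (v i)] (ttheta (v i.+1)) = ttheta (v i).
Proof.
move=> lt; have [eA _ _ [lin1 dot1 _]] := edge_facts i lt.
have [_ nAH lth inv _] := hNL i (ltnW lt).
have [nA'H sKA' abA' maxA'] := hA _ (hNL i (ltnW lt)).
rewrite -eA in nA'H maxA' abA' sKA'.
have sAA' : tA (v i) \subset tA (v i.+1) by apply: (sub_calA nAH lth inv nA'H).
split=> //; apply: lin_eq => //; exact: cfRes_lin_char.
Qed.

Lemma leaf_sub k : forall j, (j + k = n.-1)%N -> (2 <= n)%N ->
  tA (v j) \subset tA (v n.-1) /\ 'Res[tA (v j)] (ttheta (v n.-1)) = ttheta (v j).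
Proof.
elim: k => [|k IH] j.
  by rewrite addn0 => -> _; rewrite cfRes_id.
move=> ejk n2; have ej : (j.+1 + k = n.-1)%N by rewrite addSnnS.
have [sA1 eR1] := IH j.+1 ej n2.
have lt : (j.+1 < n)%N by move: ejk n2; clear; lia.
have [sA eR] := sub_next j lt.
split; first exact: subset_trans sA sA1.
by rewrite -(cfResRes _ sA sA1) eR1 eR.
Qed.

Lemma inertia_chain b : (2 <= n)%N -> b \in G -> b \in 'N(tA (v n.-1)) ->
  (ttheta (v n.-1) ^ b)%CF = ttheta (v n.-1) -> forall j, (j < n)%N -> b \in tH (v j).
Proof.
move=> n2 Gb nb eb; elim=> [|j IH] lt; first by rewrite hv0.
have Hj := IH (ltnW lt).
have [eA _ inI _] := edge_facts j lt.
have [nA'H _ _ _] := hA _ (hNL j (ltnW lt)).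
rewrite -eA in nA'H.
have nbj : b \in 'N(tA (v j.+1)) by rewrite (subsetP (normal_norm nA'H)).
apply: inI => //.
have ejk : (j.+1 + (n.-1 - j.+1) = n.-1)%N by move: lt n2; clear; lia.
have [_ eR] := leaf_sub _ _ ejk n2.
by rewrite -eR cfConjgRes_norm // eb.
Qed.
End Chain.


Theorem corollary3 (gT : finGroupType) (G N : {group gT})
    (chA : triple gT -> {group gT})
    (chL : forall t : triple gT, 'CF(chA t) -> Prop)
    (H : {group gT}) (theta : 'CF(H))
    (H2 A2 : {group gT}) (theta2 : 'CF(A2))
    (v : nat -> triple gT) (n : nat) :
  classC G -> N <| G ->
  (forall t, NLinTriple G N t -> calA_spec t (chA t)) ->
  (forall t, NLinTriple G N t -> reps_spec G N t (chL t)) ->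
  (2 <= n)%N ->
  v 0%N = @Triple gT G N (1%R : 'CF(N)) ->
  (forall i, (i < n)%N -> NLinTriple G N (v i)) ->
  (forall i, (i.+1 < n)%N -> Cl_edge chL (v i) (v i.+1)) ->
  v n.-1 = @Triple gT H H theta ->
  v 1%N = @Triple gT H2 A2 theta2 ->
  H <| 'N_G(cfker theta2) ->
  strong_Shoda_pair G H (cfker theta).
Proof.
move=> _ nNG hA hR n2 hv0 hNL hE hvn hv1 nHN.
have ltn1 : (n.-1 < n)%N by move: n2; clear; lia.
have lt1 : (1 < n)%N by [].
have := hNL _ ltn1; rewrite hvn => -[/= sHG _ lth _ _].
have [sA2H eR2] : A2 \subset H /\ ('Res[A2] theta)%R = theta2.
  have e1 : (1 + (n.-1 - 1) = n.-1)%N by move: n2; clear; lia.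
  by have := @leaf_sub _ _ _ _ _ _ _ hA hR hNL hE _ _ e1 n2; rewrite hvn hv1.
have nA2G : A2 <| G.
  have [eA _ _ _] := @edge_facts _ _ _ _ _ _ _ hR hNL hE 0 lt1.
  have [nAG _ _ _] := hA _ (hNL 0%N (ltnW lt1)).
  by move: eA nAG; rewrite hv1 hv0 /= => ->.
have inI : forall b, b \in G -> b \in 'N(H) -> (theta ^ b)%CF = theta -> b \in H.
  move=> b Gb nb eb.
  have := @inertia_chain _ _ _ _ _ _ _ hA hR hv0 hNL hE _ n2 Gb; rewrite hvn /=.
  by move=> /(_ nb eb _ ltn1); rewrite hvn.
set K := cfker theta.
set K2 := cfker theta2.
have nKH : K <| H := cfker_normal theta.
have nK2A2 : K2 <| A2 := cfker_normal theta2.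
have eK2 : A2 :&: K = K2 by rewrite /K2 -eR2 cfker_Res ?lin_charW.
have nHN' : 'N_G(K2) \subset 'N(H) := normal_norm nHN.
have NKsub : 'N_G(K) \subset 'N(H).
  apply: subset_trans nHN'; apply/subsetP => x /setIP[Gx nKx].
  rewrite inE Gx /=; apply/normP.
  have nA2x : x \in 'N(A2) by rewrite (subsetP (normal_norm nA2G)).
  by rewrite -eK2 conjIg (normP nA2x) (normP nKx).
have cHK : cyclic (H / K).
  have <- : ('Z(theta))%CF = H.
    apply/eqP; rewrite eqEsubset cfcenter_sub; apply/subsetP => x Hx.
    by rewrite char_cfcenterE ?lin_charW // normC_lin_char // lin_char1.
  exact: cfcenter_cyclic.
split=> //.
- by rewrite /normal subsetI sHG normal_norm //=.
- apply/maxgroupP; split.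
    by rewrite quotientS ?subsetIr ?subsetI ?sHG ?normal_norm //= cyclic_abelian.
  move=> B /andP[sBN abB] sHB.
  have sKG : K \subset G := subset_trans (normal_sub nKH) sHG.
  have nKN : K <| 'N_G(K) by rewrite normal_subnorm.
  set B' := (coset K @*^-1 B)%G.
  have sB'N : B' \subset 'N_G(K) by rewrite -(quotientGK nKN) cosetpreSK.
  have sB'H : B' \subset H.
    apply/subsetP => b B'b.
    have /setIP[Gb nKb] := subsetP sB'N b B'b.
    have nHb : b \in 'N(H) by rewrite (subsetP NKsub) // inE Gb.
    apply: inI => //.
    apply/cfun_inP => x Hx.
    rewrite cfConjgE //.
    have nKx : x \in 'N(K) := subsetP (normal_norm nKH) x Hx.
    have nKb' : b^-1 \in 'N(K) by rewrite groupV.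
    have Bx : coset K x \in B := subsetP sHB _ (mem_quotient _ Hx).
    have Bb' : coset K b^-1 \in B.
      by have := groupVr B'b; move/morphpreP => [].
    have kK : [~ x, b^-1] \in K.
      apply: coset_idr; first by rewrite groupR.
      rewrite morphR //; apply/eqP/commgP.
      exact: (centsP abB).
    by rewrite -(mulKVg x (x ^ b^-1)) -/(commg x b^-1) cfkerMr.
  have eB : (B : {set coset_of K}) = H / K.
    apply/eqP; rewrite eqEsubset sHB andbT.
    by rewrite -(cosetpreK B) quotientS.
  by apply/eqP; rewrite -val_eqE /= eB.
- move=> g1 g2 Gg1 Gg2.
  set g := g1^-1 * g2.
  have Gg : g \in G by rewrite groupM ?groupV.
  have e2 : gconj (geps H K) g2 = gconj (gconj (geps H K) g) g1.
    by rewrite gconjJ /g mulKVg.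
  rewrite e2; case nKg: (g \in 'N(K)).
    have nHg : g \in 'N(H) by rewrite (subsetP NKsub) // inE Gg.
    by rewrite (geps_conj_fix nKH cHK nKg nHg) eqxx.
  move=> _; rewrite -gconjM (eps_orth nKH cHK nA2G nK2A2 sA2H eK2 nHN' Gg (negbT nKg)).
  exact: gconj0.
Qed.
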